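(* For every connected access structure $\mathcal{A}\subseteq 2^P$, $\kappa(\mathcal{A})=\kappa(\mathcal{A}^\perp)$, where $\kappa(\mathcal{A})=\inf\{\sigma(\mathcal M):\mathcal M\text{ is a polymatroid realizing }\mathcal{A}\}$.
   Context: A polymatroid $(f,M)$ consists of a finite set $M$ and a function $f$ on subsets of $M$ with $f(\emptyset)=0$ that is non-negative, monotone and submodular. An access structure on a finite set $P$ is a non-empty upward-closed $\mathcal{A}\subseteq 2^P$ with $\emptyset\notin\mathcal{A}$; its dual is $\mathcal{A}^\perp=\{A\subseteq P: P\setminus A\notin\mathcal{A}\}$. A participant $i$ is important if some $A\notin\mathcal{A}$ has $A\cup\{i\}\in\mathcal{A}$; $\mathcal{A}$ is connected if every participant is important. Let $s\notin P$; juxtaposition denotes union. A polymatroid $(f,sP)$ realizes $\mathcal{A}$ if for every $A\subseteq P$: $A\in\mathcal{A}$ iff $f(sA)=f(A)$, and $A\notin\mathcal{A}$ iff $f(sA)=f(A)+f(s)$. The complexity of a realizing polymatroid is $\sigma(\mathcal M)=\max_{i\in P}f(i)/f(s)$. *)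

(* Defs.v *)
From mathcomp Require Import all_boot.
From Stdlib Require Import Reals.
Set Implicit Arguments. Unset Strict Implicit. Unset Printing Implicit Defensive.

Open Scope R_scope.

(* Ground set sP is modelled as [option P]: [None] is the dealer s, [Some i] is participant i. *)

Definition polymatroid (M : finType) (f : {set M} -> R) : Prop :=
  f set0 = 0 /\
  (forall X, 0 <= f X) /\
  (forall X Y : {set M}, X \subset Y -> f X <= f Y) /\
  (forall X Y : {set M}, f (X :|: Y) + f (X :&: Y) <= f X + f Y).

Definition access_structure (P : finType) (A : {set {set P}}) : Prop :=
  A != set0 /\
  (forall X Y : {set P}, X \in A -> X \subset Y -> Y \in A) /\
  set0 \notin A.

Definition dual_as (P : finType) (A : {set {set P}}) : {set {set P}} :=
  [set X : {set P} | ~: X \notin A].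

Definition important (P : finType) (A : {set {set P}}) (i : P) : Prop :=
  exists X : {set P}, X \notin A /\ i |: X \in A.

Definition connected_as (P : finType) (A : {set {set P}}) : Prop :=
  forall i : P, important A i.

Definition emb (P : finType) (X : {set P}) : {set option P} := Some @: X.
Definition dealer (P : finType) : {set option P} := [set None].

Definition realizes (P : finType) (f : {set option P} -> R) (A : {set {set P}}) : Prop :=
  forall X : {set P},
    (X \in A <-> f (dealer P :|: emb X) = f (emb X)) /\
    (X \notin A <-> f (dealer P :|: emb X) = f (emb X) + f (dealer P)).

(* sigma(M) = max_{i in P} f(i)/f(s) (values are nonnegative, so 0 is a neutral start). *)
Definition complexity (P : finType) (f : {set option P} -> R) : R :=
  \big[Rmax/0]_(i : P) (f [set Some i] / f (dealer P)).

Definition complexities (P : finType) (A : {set {set P}}) (x : R) : Prop :=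
  exists f : {set option P} -> R,
    polymatroid f /\ realizes f A /\ x = complexity f.

Definition is_inf (S : R -> Prop) (k : R) : Prop :=
  (forall x, S x -> k <= x) /\
  (forall m, (forall x, S x -> m <= x) -> m <= k).

(* Main.v *)
Require Import Defs.
From HB Require Import structures.
From mathcomp Require Import all_boot.
From Stdlib Require Import Reals Lra Lia.
From mathcomp Require Import zify.

Lemma RplusA : associative Rplus. Proof. move=> x y z; lra. Qed.
Lemma RplusC : commutative Rplus. Proof. move=> x y; lra. Qed.
Lemma Rplus0l : left_id 0 Rplus. Proof. move=> x; lra. Qed.
HB.instance Definition _ := Monoid.isComLaw.Build R 0 Rplus RplusA RplusC Rplus0l.

Section Constr.
Local Open Scope nat_scope.
Variables (P : finType) (A : {set {set P}}).
Hypothesis HA : access_structure A.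

Definition part (Y : {set option P}) : {set P} := [set i | Some i \in Y].

Definition Sn (p : {set P}) : nat := \sum_(B in A) minn #|p :&: B| #|B|.-1.
Definition Gn (p : {set P}) (e : bool) : nat := Sn p + (e || (p \in A)).

Definition Fc (Y : {set option P}) : R := INR (Gn (part Y) (None \in Y)).

Lemma tsub (p q B : {set P}) :
  (minn #|(p :|: q) :&: B| #|B|.-1 + minn #|(p :&: q) :&: B| #|B|.-1 <=
   minn #|p :&: B| #|B|.-1 + minn #|q :&: B| #|B|.-1)%N.
Proof.
have h1 := cardsUI (p :&: B) (q :&: B).
have e1 : (p :|: q) :&: B = (p :&: B) :|: (q :&: B) by rewrite setIUl.
have e2 : (p :&: q) :&: B = (p :&: B) :&: (q :&: B).
  by rewrite setIACA setIid.
have h2 : (#|(p :&: B) :&: (q :&: B)| <= #|p :&: B|)%N by apply: subset_leq_card; apply: subsetIl.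
have h3 : (#|(p :&: B) :&: (q :&: B)| <= #|q :&: B|)%N by apply: subset_leq_card; apply: subsetIr.
rewrite e1 e2; lia.
Qed.

Lemma Gn_sub p q e1 e2 :
  (Gn (p :|: q) (e1 || e2) + Gn (p :&: q) (e1 && e2) <= Gn p e1 + Gn q e2)%N.
Proof.
rewrite /Gn.
have Hsum : (Sn (p :|: q) + Sn (p :&: q) <= Sn p + Sn q)%N.
  rewrite /Sn -!big_split /=; apply: leq_sum => B _; exact: tsub.
have up := proj1 (proj2 HA).
have mI1 : (p :&: q \in A) ==> (p \in A) by apply/implyP => H; exact: (up _ _ H (subsetIl _ _)).
have mI2 : (p :&: q \in A) ==> (q \in A) by apply/implyP => H; exact: (up _ _ H (subsetIr _ _)).
have mU1 : (p \in A) ==> (p :|: q \in A) by apply/implyP => H; exact: (up _ _ H (subsetUl _ _)).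
have mU2 : (q \in A) ==> (p :|: q \in A) by apply/implyP => H; exact: (up _ _ H (subsetUr _ _)).
case: e1; case: e2 => /=; try lia.
case Hp: (p \in A) mI1 mU1; case Hq: (q \in A) mI2 mU2; case HI: (p :&: q \in A); case HU: (p :|: q \in A) => //=; try lia.
-
  set B0 := p :|: q.
  suff : (Sn B0 + Sn (p :&: q)).+1 <= Sn p + Sn q by lia.
  rewrite /Sn (bigD1 B0 HU) (bigD1 B0 HU (F := fun B => minn #|(p :&: q) :&: B| #|B|.-1))
          (bigD1 B0 HU (F := fun B => minn #|p :&: B| #|B|.-1))
          (bigD1 B0 HU (F := fun B => minn #|q :&: B| #|B|.-1)) /=.
  set a1 := \sum_(i in A | _) _. set a2 := \sum_(i in A | _) _.
  set a3 := \sum_(i in A | _) _. set a4 := \sum_(i in A | _) _.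
  have Ha : (a1 + a2 <= a3 + a4)%N.
    rewrite /a1 /a2 /a3 /a4 -!big_split /=; apply: leq_sum => B _; exact: tsub.
  have pB : p :&: B0 = p by apply/setIidPl; apply: subsetUl.
  have qB : q :&: B0 = q by apply/setIidPl; apply: subsetUr.
  have iB : (p :&: q) :&: B0 = p :&: q by apply/setIidPl; apply: subset_trans (subsetIl _ _) (subsetUl _ _).
  have uB : B0 :&: B0 = B0 by rewrite setIid.
  rewrite pB qB iB uB.
  have hc := cardsUI p q.
  have hpl : (#|p| < #|B0|)%N.
    apply: proper_card; rewrite properEneq subsetUl andbT.
    by apply/eqP => E; move: Hp; rewrite E HU.
  have hql : (#|q| < #|B0|)%N.
    apply: proper_card; rewrite properEneq subsetUr andbT.
    by apply/eqP => E; move: Hq; rewrite E HU.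
  rewrite -/B0 in hc.
  lia.
Qed.

Lemma partU (X Y : {set option P}) : part (X :|: Y) = part X :|: part Y.
Proof. by apply/setP => i; rewrite !inE. Qed.
Lemma partI (X Y : {set option P}) : part (X :&: Y) = part X :&: part Y.
Proof. by apply/setP => i; rewrite !inE. Qed.
Lemma part_sub (X Y : {set option P}) : X \subset Y -> part X \subset part Y.
Proof. move=> H; apply/subsetP => i; rewrite !inE => Hi; exact: (subsetP H). Qed.
Lemma part_emb (X : {set P}) : part (emb X) = X.
Proof. apply/setP => i; rewrite !inE /emb mem_imset //; by move=> a b [->]. Qed.
Lemma part_demb (X : {set P}) : part (dealer P :|: emb X) = X.
Proof. by rewrite partU part_emb; apply/setP => i; rewrite !inE. Qed.
Lemma None_emb (X : {set P}) : (None \in emb X) = false.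
Proof. by apply/negbTE/negP => /imsetP [? _]. Qed.

Lemma Sn0 : Sn set0 = 0.
Proof. rewrite /Sn big1 // => B _; by rewrite set0I cards0 min0n. Qed.

Lemma Fc_poly : polymatroid Fc.
Proof.
split; [|split; [|split]].
- rewrite /Fc /Gn in_set0.
  have -> : part set0 = set0 by apply/setP => i; rewrite !inE.
  by rewrite Sn0 (negbTE (proj2 (proj2 HA))).
- move=> X; exact: pos_INR.
- move=> X Y H; apply: le_INR; apply/leP; rewrite /Gn.
  have hp := part_sub _ _ H.
  apply: leq_add.
    rewrite /Sn; apply: leq_sum => B _.
    have := subset_leq_card (setSI B hp); lia.
  case e: (None \in X).
    by rewrite (subsetP H _ e).
  case h: (part X \in A); last by rewrite orbF; case: (_ || _).
  have h2 := (proj1 (proj2 HA)) _ _ h hp.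
  by rewrite h2 orbT; case: (None \in Y).
- move=> X Y; rewrite /Fc -!plus_INR; apply: le_INR; apply/leP.
  rewrite partU partI in_setU in_setI; exact: Gn_sub.
Qed.

Lemma Fc_real : realizes Fc A.
Proof.
move=> X; rewrite /Fc /Gn part_demb part_emb !in_setU None_emb /dealer in_set1 eqxx /=.
have -> : part [set None] = set0 by apply/setP => i; rewrite !inE.
rewrite Sn0 !plus_INR.
case: (X \in A); simpl INR; split; split => //= H; first [lra | exfalso; lra].
Qed.

Lemma nonempty_compl : exists x, complexities A x.
Proof. by exists (complexity Fc); exists Fc; split; [exact: Fc_poly | split; [exact: Fc_real|]]. Qed.
End Constr.

Lemma embin (P : finType) (i : P) (X : {set P}) : (Some i \in emb X) = (i \in X).
Proof. rewrite /emb mem_imset //; by move=> a b [->]. Qed.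

Lemma compl1 (P : finType) (X : {set P}) : ~: (dealer P :|: emb X) = emb (~: X).
Proof. apply/setP => -[i|]; rewrite !inE ?embin ?None_emb ?inE //. Qed.
Lemma compl2 (P : finType) (X : {set P}) : ~: (emb X) = dealer P :|: emb (~: X).
Proof. apply/setP => -[i|]; rewrite !inE ?embin ?None_emb ?inE //. Qed.
Lemma dI (P : finType) (X : {set P}) : dealer P :&: emb X = set0.
Proof. apply/setP => -[i|]; rewrite !inE ?embin ?None_emb ?inE //. Qed.
Lemma dT (P : finType) : dealer P :|: emb setT = setT.
Proof. apply/setP => -[i|]; rewrite !inE ?embin ?None_emb ?inE //. Qed.
Lemma d0 (P : finType) : dealer P :|: emb set0 = dealer P.
Proof. apply/setP => -[i|]; rewrite !inE ?embin ?None_emb ?inE //. Qed.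

Lemma setT_in (P : finType) (A : {set {set P}}) : access_structure A -> setT \in A.
Proof.
case=> ne [up _]; case/set0Pn: ne => X HX; exact: (up _ _ HX (subsetT X)).
Qed.

Section Dual.
Variables (P : finType) (A : {set {set P}}).
Hypothesis HA : access_structure A.
Variable f : {set option P} -> R.
Hypothesis Hf : polymatroid f.
Hypothesis Hr : realizes f A.
Implicit Types X Y Z W : {set option P}.

Definition wsum (X : {set option P}) : R := \big[Rplus/0]_(x in X) f [set x].
Definition fd (Y : {set option P}) : R := f (~: Y) + wsum Y - f setT.

Lemma f0 : f set0 = 0. Proof. by case: Hf. Qed.
Lemma fnn X : 0 <= f X. Proof. by case: Hf => _ [H _]; apply: H. Qed.
Lemma fmon X Y : X \subset Y -> f X <= f Y. Proof. by case: Hf => _ [_ [H _]]; apply: H. Qed.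
Lemma fsub X Y : f (X :|: Y) + f (X :&: Y) <= f X + f Y. Proof. by case: Hf => _ [_ [_ H]]; apply: H. Qed.

Lemma wsum0 : wsum set0 = 0. Proof. by rewrite /wsum big_set0. Qed.

Lemma wsumUI X Y : wsum (X :|: Y) + wsum (X :&: Y) = wsum X + wsum Y.
Proof.
rewrite /wsum !(big_mkcond (fun x => x \in _)) -!big_split /=.
apply: eq_bigr => x _; rewrite !inE; case: (x \in X); case: (x \in Y) => /=; lra.
Qed.

Lemma subadd n : forall Z W, #|W| = n -> f (Z :|: W) <= f Z + wsum W.
Proof.
elim: n => [|n IH] Z W HW.
  move/cards0_eq: HW => ->; rewrite setU0 wsum0; lra.
have : (0 < #|W|)%nat by rewrite HW.
rewrite card_gt0 => /set0Pn [x Hx].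
have HW' : #|W :\ x| = n by move: HW; rewrite (cardsD1 x W) Hx; case.
have E1 : wsum W = f [set x] + wsum (W :\ x) by rewrite /wsum (big_setD1 x Hx).
have E2 : Z :|: W = (Z :|: (W :\ x)) :|: [set x].
  by rewrite -setUA (setUC (W :\ x)) setD1K.
have h1 := IH Z _ HW'.
have h2 := fsub (Z :|: (W :\ x)) [set x].
have h3 := fnn ((Z :|: (W :\ x)) :&: [set x]).
rewrite E1 E2; lra.
Qed.

Lemma fd_poly : polymatroid fd.
Proof.
have mono : forall X Y, X \subset Y -> fd X <= fd Y.
  move=> X Y H.
  have e1 : Y = X :|: (Y :\: X).
    apply/setP => x; rewrite !inE; case hx: (x \in X); case hy: (x \in Y) => //=.
    by rewrite (subsetP H _ hx) in hy.
  have e2 : X :&: (Y :\: X) = set0.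
    by apply/setP => x; rewrite !inE; case: (x \in X).
  have w := wsumUI X (Y :\: X); rewrite -e1 e2 wsum0 in w.
  have e3 : ~: X = ~: Y :|: (Y :\: X).
    apply/setP => x; rewrite !inE; case hx: (x \in X); case hy: (x \in Y) => //=.
    by rewrite (subsetP H _ hx) in hy.
  have s := subadd _ (~: Y) (Y :\: X) (erefl _).
  rewrite /fd e3; lra.
have z : fd set0 = 0 by rewrite /fd setC0 wsum0; lra.
split; [exact: z | split; [| split]].
- move=> X; rewrite -z; apply: mono; exact: sub0set.
- exact: mono.
- move=> X Y; rewrite /fd.
  have h := fsub (~: X) (~: Y).
  have w := wsumUI X Y.
  rewrite setCU setCI; lra.
Qed.

Lemma fT : f setT = f (emb setT).
Proof. by rewrite -(dT P); apply: (proj1 (proj1 (Hr setT))); apply: setT_in. Qed.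

Lemma fd_dealer : fd (dealer P) = f (dealer P).
Proof.
rewrite /fd -{1}(d0 P) compl1 setC0 /wsum /dealer big_set1 fT. rewrite (_ : forall a b, a + b - a = b) // => a b; lra.
Qed.

Lemma fdealer_pos : 0 < f (dealer P).
Proof.
have := fnn (dealer P); case/Rle_lt_or_eq_dec => // H.
have h := proj2 (Hr setT).
have hT := setT_in _ _ HA.
have : setT \notin A.
  apply/(proj2 h); rewrite -H Rplus_0_r; exact: (proj1 (proj1 (Hr setT))) hT.
by rewrite hT.
Qed.

Lemma wsum_d (X : {set P}) : wsum (dealer P :|: emb X) = f (dealer P) + wsum (emb X).
Proof.
have wd : wsum (dealer P) = f (dealer P) by rewrite /wsum /dealer big_set1.
have := wsumUI (dealer P) (emb X); rewrite dI wsum0 wd; lra.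
Qed.

Lemma fd_real : realizes fd (dual_as A).
Proof.
move=> X.
have [r1 r2] := Hr (~: X).
rewrite fd_dealer /fd compl1 compl2 wsum_d inE.
have n := negbK (~: X \in A).
split.
- split => H.
  + have := (proj1 r2) H; lra.
  + apply/(proj2 r2); lra.
- rewrite negbK; split => H.
  + have := (proj1 r1) H; lra.
  + apply/(proj2 r1); lra.
Qed.

Lemma fd_compl : complexity fd <= complexity f.
Proof.
rewrite /complexity fd_dealer.
apply: (big_ind2 (fun x y => x <= y)); first lra.
  move=> x1 x2 y1 y2 h1 h2.
  apply: Rle_trans (Rle_max_compat_r _ _ _ h1) (Rle_max_compat_l _ _ _ h2).
move=> i _; unfold Rdiv; apply: Rmult_le_compat_r.
  exact: (Rlt_le _ _ (Rinv_0_lt_compat _ fdealer_pos)).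
have key : forall a b c, a <= c -> a + b - c <= b by move=> *; lra.
rewrite /fd; have -> : wsum [set Some i] = f [set Some i] by rewrite /wsum big_set1.
apply: key; exact: fmon (subsetT _).
Qed.
End Dual.

Arguments fd {P} f Y.
Lemma dual_step (P : finType) (A : {set {set P}}) : access_structure A ->
  forall x, complexities A x -> exists y, complexities (dual_as A) y /\ y <= x.
Proof.
move=> HA x [f [Hf [Hr ->]]].
exists (complexity (fd f)); split; last by apply: fd_compl; eassumption.
by exists (fd f); split; [apply: fd_poly; eassumption | split; [apply: fd_real; eassumption|]].
Qed.

Lemma compl_ge0 (P : finType) (A : {set {set P}}) x : complexities A x -> 0 <= x.
Proof.
move=> [f [_ [_ ->]]]; rewrite /complexity.
apply: (big_rec (fun x => 0 <= x)); first lra.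
move=> i y _ Hy; apply: Rle_trans Hy (Rmax_r _ _).
Qed.

Lemma inf_ex (S : R -> Prop) : (exists x, S x) -> (forall x, S x -> 0 <= x) ->
  exists k, is_inf S k.
Proof.
move=> [x0 Hx0] Hlb.
have Hb : bound (fun y => S (- y)).
  exists 0 => y Hy; have := Hlb _ Hy; lra.
have He : exists y, S (- y) by exists (- x0); rewrite Ropp_involutive.
have [m [Hub Hl]] := completeness _ Hb He.
exists (- m); split.
- move=> x Hx; have Hx' : S (- - x) by rewrite Ropp_involutive.
  have := Hub (- x) Hx'; lra.
- move=> m' Hm'.
  have : m <= - m'.
    apply: Hl => y Hy; have := Hm' _ Hy; lra.
  lra.
Qed.

Lemma dual_as_struct (P : finType) (A : {set {set P}}) :
  access_structure A -> access_structure (dual_as A).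
Proof.
move=> HA; have [ne [up n0]] := HA.
split; [|split].
- apply/set0Pn; exists setT; rewrite inE setCT; exact: n0.
- move=> X Y; rewrite !inE => HX HXY; apply/negP => HY.
  by move/negP: HX; apply; apply: up HY _; rewrite setCS.
- rewrite inE setC0 negbK; exact: setT_in.
Qed.

Lemma dual_dual (P : finType) (A : {set {set P}}) : dual_as (dual_as A) = A.
Proof. by apply/setP => X; rewrite !inE setCK negbK. Qed.

Theorem claim2p13 (P : finType) (A : {set {set P}}) :
  access_structure A -> connected_as A ->
  exists k : R, is_inf (complexities A) k /\ is_inf (complexities (dual_as A)) k.
Proof.
move=> HA _.
have HD := dual_as_struct _ _ HA.
have [kA [lA gA]] := inf_ex _ (nonempty_compl _ _ HA) (compl_ge0 _ A).
have [kB [lB gB]] := inf_ex _ (nonempty_compl _ _ HD) (compl_ge0 _ (dual_as A)).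
have h1 : kB <= kA.
  apply: gA => x Hx; have [y [Hy Hyx]] := dual_step _ _ HA _ Hx.
  have := lB _ Hy; lra.
have h2 : kA <= kB.
  apply: gB => x Hx; have [y [Hy Hyx]] := dual_step _ _ HD _ Hx.
  rewrite dual_dual in Hy; have := lA _ Hy; lra.
have E : kA = kB by lra.
exists kA; split; [by split | rewrite E; by split].
Qed.
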